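(* For each natural number $m\ge1$, the sequence $H(n)\bmod m$ is uniformly distributed in $\{0,1,\dots,m-1\}$: for every $j\in\{0,\dots,m-1\}$, $\frac1N\#\{1\le n\le N: H(n)\equiv j \pmod m\}\to\frac1m$ as $N\to\infty$.
   Context: $H$ is Hofstadter's $H$ sequence: $H(1)=1$ and $H(n)=n-H(H(H(n-1)))$ for $n>1$. *)

(* Defs.v *)
From Stdlib Require Import Reals List Arith.
Import ListNotations.

(* Hofstadter's H sequence: H(1)=1, H(n)=n-H(H(H(n-1))) for n>1.
   Hval 0 = 0 is a harmless placeholder (never used by the statement).
   hseq n = [H 0; H 1; ...; H n]; since 0 <= H k <= k, all lookups
   below are in range, so the default value of nth is never used. *)
Fixpoint hseq (n : nat) : list nat :=
  match n with
  | 0 => [0]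
  | S k =>
      let t := hseq k in
      let get i := nth i t 0 in
      let v := match k with
               | 0 => 1
               | _ => S k - get (get (get k))
               end in
      t ++ [v]
  end.

Definition H (n : nat) : nat := nth n (hseq n) 0.

Fixpoint count_res (m j N : nat) : nat :=
  match N with
  | 0 => 0
  | S N' => count_res m j N' + (if Nat.eqb (H (S N') mod m) j then 1 else 0)
  end.

(* Main.v *)
Require Import Defs.
From Stdlib Require Import Reals Arith Lia List Lra.
Import ListNotations.


Lemma hseq_len : forall k, length (hseq k) = S k.
Proof. induction k; simpl; auto. rewrite length_app, IHk; simpl; lia. Qed.

Lemma hseq_prefix : forall k i, i <= k -> nth i (hseq (S k)) 0 = nth i (hseq k) 0.
Proof.
  intros k i Hi. cbn [hseq]. rewrite app_nth1; auto. rewrite hseq_len; lia.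
Qed.

Lemma nth_hseq : forall k i, i <= k -> nth i (hseq k) 0 = H i.
Proof.
  induction k; intros i Hi.
  - assert (i = 0) by lia; subst; reflexivity.
  - destruct (Nat.eq_dec i (S k)). subst; reflexivity.
    rewrite hseq_prefix by lia. apply IHk; lia.
Qed.

Lemma H_S_raw : forall k, H (S k) =
  match k with 0 => 1 | _ => S k - nth (nth (nth k (hseq k) 0) (hseq k) 0) (hseq k) 0 end.
Proof.
  intros k. unfold H at 1. cbn [hseq]. rewrite app_nth2; rewrite hseq_len; [|lia].
  rewrite Nat.sub_diag. reflexivity.
Qed.

Lemma H0 : H 0 = 0. Proof. reflexivity. Qed.

Lemma H_le : forall n, H n <= n.
Proof. intros [|k]. rewrite H0; lia. rewrite H_S_raw. destruct k; lia. Qed.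

Lemma H_rec : forall n, H (S n) = S n - H (H (H n)).
Proof.
  intros n. rewrite H_S_raw. destruct n as [|k].
  - reflexivity.
  - rewrite (nth_hseq (S k) (S k)) by lia.
    rewrite (nth_hseq (S k) (H (S k))) by apply H_le.
    rewrite (nth_hseq (S k) (H (H (S k)))).
    reflexivity. pose proof (H_le (S k)) as h1. pose proof (H_le (H (S k))) as h2. lia.
Qed.

Fixpoint A (n : nat) : nat :=
  match n with
  | 0 => 1 | 1 => 1 | 2 => 2
  | S ((S (S k)) as p) => A p + A k
  end.

Lemma A_rec : forall i, A (S (S (S i))) = A (S (S i)) + A i.
Proof. reflexivity. Qed.

Lemma A_pos : forall i, 1 <= A i.
Proof. fix IH 1. intros [|[|[|i]]]; simpl; try lia. pose proof (IH i). lia. Qed.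

Lemma A_mono1 : forall i, A i <= A (S i).
Proof. intros [|[|i]]; [simpl; lia|simpl; lia|]. rewrite A_rec; lia. Qed.

Lemma A_mono : forall i j, i <= j -> A i <= A j.
Proof. intros i j Hij. induction Hij. lia. pose proof (A_mono1 m). lia. Qed.

Lemma A_ge : forall i, i <= A i.
Proof. induction i as [|i IH]. simpl; lia. destruct i as [|[|i]]; try (simpl; lia).
  all: rewrite A_rec; pose proof (A_pos i); lia. Qed.


Lemma Ar : forall i, A (i+3) = A (i+2) + A i.
Proof. intros i. replace (i+3) with (S (S (S i))) by lia. replace (i+2) with (S (S i)) by lia. reflexivity. Qed.

Global Ltac pp t := let h := fresh "hh" in pose proof t as h.
Ltac normA := rewrite <- ?Nat.add_assoc in *; cbn [Nat.add] in *.

Definition SP n := forall k x, x <= A (k+3) -> n = A (k+4) + x -> H n = A (k+3) + H x.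
Definition BP n := forall j, n <= A (j+1) -> H n <= A j.

Lemma Hrec' : forall n, 1 <= n -> H n = n - H (H (H (n-1))).
Proof. intros [|n] Hn. lia. rewrite H_rec. f_equal. f_equal. f_equal. f_equal. lia. Qed.

Lemma H3_le : forall n, H (H (H n)) <= n.
Proof. intros n. pp (H_le n). pp (H_le (H n)). pp (H_le (H (H n))). lia. Qed.

Lemma SP_base : forall k x, k <= 2 -> x <= A (k+3) -> H (A (k+4) + x) = A (k+3) + H x.
Proof.
  intros k x Hk Hx. destruct k as [|[|[|k]]]; try lia; simpl in Hx |- *;
  do 7 (destruct x as [|x]; [first [vm_compute; reflexivity | lia]|]); lia.
Qed.

Lemma SP_BP : forall n, SP n /\ BP n.
Proof.
  intros n. induction n as [n IH] using lt_wf_ind.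
  assert (HS : SP n).
  { intros k x Hx Hn.
    destruct (le_lt_dec k 2) as [Hk|Hk]. subst; apply SP_base; auto.
    destruct k as [|[|[|k]]]; try lia. replace (S (S (S k))) with (k+3) in * by lia.
    normA.
    pose proof (Ar (k+4)) as E7. pose proof (Ar (k+3)) as E6. pose proof (Ar (k+2)) as E5.
    pose proof (Ar (k+1)) as E4. pose proof (Ar k) as E3. normA.
    pose proof (A_pos k) as P0. pose proof (A_pos (k+1)) as P1. pose proof (A_pos (k+2)) as P2.
    pose proof (A_pos (k+3)) as P3.
    destruct x as [|x].
    -
      rewrite Nat.add_0_r in Hn. subst n.
      rewrite (H0). rewrite Nat.add_0_r.
      rewrite (Hrec' (A (k+7))) by lia.
      assert (Hm : A (k+7) - 1 = A (k+6) + (A (k+4) - 1)) by lia. rewrite Hm.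
      destruct (IH (A (k+6) + (A (k+4) - 1)) ltac:(lia)) as [SPa _].
      rewrite (SPa (k+2) (A (k+4) - 1)) by (normA; lia). normA.
      remember (H (A (k+4) - 1)) as y1 eqn:Ey1.
      destruct (IH (A (k+4) - 1) ltac:(lia)) as [_ BPa].
      assert (Hy1 : y1 <= A (k+3)) by (subst; apply (BPa (k+3)); normA; lia).
      destruct (IH (A (k+5) + y1) ltac:(pp (H_le (A (k+4) - 1)); lia)) as [SPb _].
      rewrite (SPb (k+1) y1) by (normA; lia). normA.
      remember (H y1) as y2 eqn:Ey2.
      destruct (IH y1 ltac:(pp (H_le (A (k+4) - 1)); lia)) as [_ BPb].
      assert (Hy2 : y2 <= A (k+2)) by (subst; apply (BPb (k+2)); normA; lia).
      destruct (IH (A (k+4) + y2) ltac:(pp (H_le y1); lia)) as [SPc _].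
      rewrite (SPc k y2) by (normA; lia).
      destruct (IH (A (k+4)) ltac:(lia)) as [SPd _].
      pose proof (SPd k 0 ltac:(lia) ltac:(lia)) as Hd. rewrite H0, !Nat.add_0_r in Hd.
      rewrite (Hrec' (A (k+4))) in Hd by lia.
      pp (H3_le (A (k+4) - 1)). subst y2 y1. lia.
    - subst n.
      rewrite (Hrec' (A (k+7) + S x)) by lia.
      replace (A (k+7) + S x - 1) with (A (k+7) + x) by lia.
      destruct (IH (A (k+7) + x) ltac:(lia)) as [SPa _].
      rewrite (SPa (k+3) x) by (normA; lia). normA.
      remember (H x) as y1 eqn:Ey1.
      destruct (IH x ltac:(lia)) as [_ BPa].
      assert (Hy1 : y1 <= A (k+5)) by (subst; apply (BPa (k+5)); normA; lia).
      destruct (IH (A (k+6) + y1) ltac:(pp (H_le x); lia)) as [SPb _].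
      rewrite (SPb (k+2) y1) by (normA; lia). normA.
      remember (H y1) as y2 eqn:Ey2.
      destruct (IH y1 ltac:(pp (H_le x); lia)) as [_ BPb].
      assert (Hy2 : y2 <= A (k+4)) by (subst; apply (BPb (k+4)); normA; lia).
      destruct (IH (A (k+5) + y2) ltac:(pp (H_le y1); pp (H_le x); lia)) as [SPc _].
      rewrite (SPc (k+1) y2) by (normA; lia). normA.
      rewrite (Hrec' (S x)) by lia. replace (S x - 1) with x by lia.
      pp (H3_le x). subst y2 y1. lia. }
  split; auto.
  intros j. induction j as [|j IHj]; intros Hj.
  - simpl in Hj. destruct n as [|[|]]; try lia; vm_compute; lia.
  - destruct (le_lt_dec j 2) as [Hj2|Hj2].
    + destruct j as [|[|[|]]]; try lia; simpl in Hj;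
      do 5 (destruct n as [|n]; [vm_compute; lia|]); lia.
    + destruct (le_lt_dec n (A (j+1))) as [Hn|Hn].
      * pp (IHj Hn). pp (A_mono j (S j)). lia.
      * destruct j as [|[|[|j]]]; try lia. replace (S (S (S j))) with (j+3) in * by lia.
        normA.
        pose proof (Ar (j+2)) as E5. pose proof (Ar (j+1)) as E4. pose proof (Ar j) as E3. normA.
        pp (A_pos j).
        replace (S (j+4)) with (j+5) in * by lia; replace (S (j+3)) with (j+4) in * by lia.
        rewrite (HS j (n - A (j+4))) by (normA; lia).
        destruct (IH (n - A (j+4)) ltac:(lia)) as [_ BPa].
        pose proof (BPa (j+1) ltac:(normA; lia)). lia.
Qed.

From Coquelicot Require Import Coquelicot.
Open Scope R_scope.

Lemma SP_all : forall k x, (x <= A (k+3))%nat -> H (A (k+4) + x) = (A (k+3) + H x)%nat.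
Proof. intros k x Hx. destruct (SP_BP (A (k+4) + x)) as [S _]. apply S; auto. Qed.

Section F.
Variables m h : nat.

Definition ang (q : nat) : R := 2 * PI * INR h * INR q / INR m.
Definition ee (q : nat) : Complex.C := (cos (ang q), sin (ang q)).
Fixpoint SS (N : nat) : Complex.C :=
  match N with 0 => RtoC 0 | S N' => Cplus (SS N') (ee (H N')) end.
Definition X (k : nat) := SS (A k).

Lemma ee_add : forall a b, ee (a + b) = Cmult (ee a) (ee b).
Proof.
  intros a b. unfold ee, Cmult. simpl.
  assert (ang (a+b) = ang a + ang b) as E. { unfold ang. rewrite plus_INR. unfold Rdiv. ring. }
  rewrite E, cos_plus, sin_plus. f_equal; ring.
Qed.

Lemma Cmod_ee : forall q, Cmod (ee q) = 1.
Proof. intros q. unfold Cmod, ee. simpl. rewrite Rplus_comm.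
  replace (sin (ang q) * (sin (ang q) * 1) + cos (ang q) * (cos (ang q) * 1)) with
   ((sin (ang q))² + (cos (ang q))²) by (unfold Rsqr; ring).
  rewrite sin2_cos2. apply sqrt_1. Qed.

Lemma SS_le : forall N, Cmod (SS N) <= INR N.
Proof. induction N. simpl. rewrite Cmod_0; lra.
  simpl SS. rewrite S_INR. eapply Rle_trans. apply Cmod_triangle. rewrite Cmod_ee. lra. Qed.

Lemma block : forall k y, (y <= A (k+3) + 1)%nat ->
  SS (A (k+4) + y) = Cplus (SS (A (k+4))) (Cmult (ee (A (k+3))) (SS y)).
Proof.
  intros k y. induction y; intros Hy.
  - rewrite Nat.add_0_r. simpl. apply injective_projections; simpl; ring.
  - rewrite Nat.add_succ_r. simpl SS. rewrite IHy by lia. rewrite SP_all by lia.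
    rewrite ee_add. ring.
Qed.

Lemma Xrec : forall q, (2 <= q)%nat -> X (q+3) = Cplus (X (q+2)) (Cmult (ee (A (q+1))) (X q)).
Proof.
  intros q Hq. destruct q as [|[|k]]; try lia. unfold X.
  replace (S (S k) + 3)%nat with (k+5)%nat by lia. replace (S (S k) + 2)%nat with (k+4)%nat by lia.
  replace (S (S k) + 1)%nat with (k+3)%nat by lia. replace (S (S k))%nat with (k+2)%nat by lia.
  replace (A (k+5)) with (A (k+4) + A (k+2))%nat by (pp (Ar (k+2)); normA; lia).
  apply block. pp (A_mono (k+2) (k+3) ltac:(lia)). lia.
Qed.
End F.


Lemma cos_lt_1 : forall m r, (0 < r < m)%nat -> cos (2 * PI * INR r / INR m) < 1.
Proof.
  intros m r Hr.
  assert (Hm : 0 < INR m) by (apply lt_0_INR; lia).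
  assert (Hr0 : 0 < INR r) by (apply lt_0_INR; lia).
  assert (Hrm : INR r < INR m) by (apply lt_INR; lia).
  replace (2 * PI * INR r / INR m) with (2 * (PI * INR r / INR m)) by (field; lra).
  rewrite cos_2a_sin.
  assert (0 < sin (PI * INR r / INR m)).
  { apply sin_gt_0.
    - apply Rdiv_lt_0_compat; [|lra]. pp PI_RGT_0. nra.
    - apply Rmult_lt_reg_r with (INR m); auto. field_simplify; [|lra].
      pp PI_RGT_0. nra. }
  nra.
Qed.

Lemma gamma_ex : forall m, exists g, 0 < g <= 1 /\
  forall r, (0 < r < m)%nat -> cos (2 * PI * INR r / INR m) <= 1 - g.
Proof.
  intros m.
  assert (forall M, exists g, 0 < g <= 1 /\
    forall r, (0 < r <= M)%nat -> (r < m)%nat -> cos (2 * PI * INR r / INR m) <= 1 - g).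
  { induction M as [|M IH].
    - exists 1. split. lra. intros; lia.
    - destruct IH as [g [Hg Hr]].
      destruct (lt_dec (S M) m) as [HM|HM].
      + pp (cos_lt_1 m (S M) ltac:(lia)).
        exists (Rmin g (1 - cos (2 * PI * INR (S M) / INR m))). split.
        * split. apply Rmin_pos; lra. pp (Rmin_l g (1 - cos (2 * PI * INR (S M) / INR m))). lra.
        * intros r Hr1 Hr2. destruct (Nat.eq_dec r (S M)).
          -- subst. pp (Rmin_r g (1 - cos (2 * PI * INR (S M) / INR m))). lra.
          -- pp (Hr r ltac:(lia) Hr2). pp (Rmin_l g (1 - cos (2 * PI * INR (S M) / INR m))). lra.
      + exists g. split; auto. intros r Hr1 Hr2. apply Hr; lia. }
  destruct (H m) as [g [Hg Hr]]. exists g. split; auto. intros r Hr'. apply Hr; lia.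
Qed.

Lemma cos_ang_red : forall m h q, (1 <= m)%nat ->
  cos (ang m h q) = cos (2 * PI * INR ((h * q) mod m) / INR m).
Proof.
  intros m h q Hm. unfold ang.
  pp (Nat.div_mod_eq (h*q) m).
  assert (E : 2 * PI * INR h * INR q / INR m =
     2 * PI * INR ((h * q) mod m) / INR m + 2 * INR ((h*q)/m) * PI).
  { rewrite Rmult_assoc. rewrite <- mult_INR. rewrite hh at 1. rewrite plus_INR, mult_INR.
    assert (0 < INR m) by (apply lt_0_INR; lia). field. lra. }
  rewrite E. apply cos_period.
Qed.


Lemma find_k : forall K N, (A K <= N)%nat -> exists k, (K <= k)%nat /\ (A k <= N < A (S k))%nat.
Proof.
  intros K N HK.
  assert (forall t, (exists k, (K <= k)%nat /\ (A k <= N < A (S k))%nat) \/ (A (K + t) <= N)%nat).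
  { induction t as [|t IH]. right. rewrite Nat.add_0_r; auto.
    destruct IH as [IH|IH]. left; auto.
    destruct (le_lt_dec (A (S (K+t))) N). right. rewrite Nat.add_succ_r; auto.
    left. exists (K+t)%nat. split. lia. lia. }
  destruct (H (S N)) as [E|E]; auto. pp (A_ge (K + S N)%nat). lia.
Qed.

Section D.
Variables m h : nat.
Hypothesis Hm : (2 <= m)%nat.
Hypothesis Hh : (0 < h < m)%nat.

Lemma one_plus_ee : exists d, 0 < d <= 1/2 /\ forall q, ((h * q) mod m <> 0)%nat ->
  Cmod (Cplus (RtoC 1) (ee m h q)) <= 2 - d.
Proof.
  destruct (gamma_ex m) as [g [Hg Hc]]. exists (g/2). split. lra.
  intros q Hq.
  pp (Cmod2_alt (Cplus (RtoC 1) (ee m h q))).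
  pp (Cmod_ge_0 (Cplus (RtoC 1) (ee m h q))).
  set (c := Cmod (Cplus (RtoC 1) (ee m h q))) in *.
  simpl in hh. rewrite cos_ang_red in hh by lia.
  pp (Hc ((h*q) mod m)%nat ltac:(split; [lia| apply Nat.mod_upper_bound; lia])).
  pp (sin2_cos2 (ang m h q)). rewrite cos_ang_red in hh2 by lia. unfold Rsqr in hh2.
  nra.
Qed.

Lemma no_triple : forall i, ~ ((h * A i) mod m = 0 /\ (h * A (i+1)) mod m = 0 /\ (h * A (i+2)) mod m = 0)%nat.
Proof.
  induction i as [|i IH]; intros [E0 [E1 E2]].
  - simpl in E0. rewrite Nat.mul_1_r, Nat.mod_small in E0 by lia. lia.
  - apply IH. split; [|split].
    + rewrite Nat.mod_divide in * by lia.
      replace (S i + 2)%nat with (i + 3)%nat in E2 by lia. rewrite Ar, Nat.mul_add_distr_l in E2.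
      replace (S i + 1)%nat with (i + 2)%nat in E1 by lia.
      exact (Nat.divide_add_cancel_r _ _ _ E1 E2).
    + replace (i+1)%nat with (S i) by lia. auto.
    + replace (i+2)%nat with (S i + 1)%nat by lia. auto.
Qed.

Definition x i := Cmod (X m h i).
Definition a i := INR (A i).

Lemma a_rec : forall i, a (i+3) = a (i+2) + a i.
Proof. intros i. unfold a. rewrite Ar, plus_INR. reflexivity. Qed.

Lemma a_pos : forall i, 1 <= a i.
Proof. intros i. unfold a. pp (A_pos i). apply (le_INR 1) in hh. simpl in hh. lra. Qed.

Lemma a_mono : forall i j, (i <= j)%nat -> a i <= a j.
Proof. intros. unfold a. apply le_INR, A_mono; auto. Qed.

Lemma x_ge0 : forall i, 0 <= x i.
Proof. intros; apply Cmod_ge_0. Qed.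

Lemma x_tri : forall q, (2 <= q)%nat -> x (q+3) <= x (q+2) + x q.
Proof.
  intros q Hq. unfold x. rewrite Xrec by auto. eapply Rle_trans. apply Cmod_triangle.
  rewrite Cmod_mult, Cmod_ee. lra.
Qed.

Lemma x_three : forall q, (2 <= q)%nat ->
  x (q+5) <= Cmod (Cplus (RtoC 1) (ee m h (A (q+3)))) * x (q+2) + x (q+1) + x q.
Proof.
  intros q Hq. unfold x.
  pp (Xrec m h (q+2) ltac:(lia)). pp (Xrec m h (q+1) ltac:(lia)). pp (Xrec m h q ltac:(lia)).
  normA.
  rewrite hh, hh0, hh1.
  replace (Cplus (Cplus (Cplus (X m h (q + 2)) (Cmult (ee m h (A (q + 1))) (X m h q)))
              (Cmult (ee m h (A (q + 2))) (X m h (q + 1))))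
              (Cmult (ee m h (A (q + 3))) (X m h (q + 2))))
   with (Cplus (Cplus (Cmult (Cplus (RtoC 1) (ee m h (A (q + 3)))) (X m h (q + 2)))
                (Cmult (ee m h (A (q + 2))) (X m h (q + 1))))
                (Cmult (ee m h (A (q + 1))) (X m h q))) by ring.
  eapply Rle_trans. apply Cmod_triangle. eapply Rle_trans. apply Rplus_le_compat_r. apply Cmod_triangle.
  rewrite !Cmod_mult, !Cmod_ee. lra.
Qed.

Lemma prop : forall k B, (2 <= k)%nat -> x k <= B * a k -> x (k+1) <= B * a (k+1) ->
  x (k+2) <= B * a (k+2) -> forall i, (k <= i)%nat -> x i <= B * a i.
Proof.
  intros k B Hk H0 H1 H2.
  assert (forall t, x (k+t) <= B * a (k+t) /\ x (k+t+1) <= B * a (k+t+1) /\ x (k+t+2) <= B * a (k+t+2)).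
  { induction t as [|t [IH0 [IH1 IH2]]].
    - rewrite Nat.add_0_r. auto.
    - replace (k + S t)%nat with (k+t+1)%nat by lia.
      replace (k+t+1+1)%nat with (k+t+2)%nat by lia.
      replace (k+t+1+2)%nat with (k+t+3)%nat by lia.
      repeat split; auto.
      pp (x_tri (k+t) ltac:(lia)). pp (a_rec (k+t)). nra. }
  intros i Hi. destruct (H (i - k)%nat) as [E _]. replace (k + (i-k))%nat with i in E by lia. auto.
Qed.

Lemma drop : forall d, 0 < d <= 1/2 ->
  (forall q, ((h * q) mod m <> 0)%nat -> Cmod (Cplus (RtoC 1) (ee m h q)) <= 2 - d) ->
  forall k B, (2 <= k)%nat -> 0 <= B -> (forall i, (k <= i)%nat -> x i <= B * a i) ->
  forall i, (k + 8 <= i)%nat -> x i <= B * (1 - d/16) * a i.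
Proof.
  intros d Hd Hc k B Hk HB Hx.
  assert (exists q, (k <= q <= k+2)%nat /\ ((h * A (q+3)) mod m <> 0)%nat) as [q [Hq Hnz]].
  { pp (no_triple (k+3)). normA.
    destruct (Nat.eq_dec ((h * A (k+3)) mod m) 0); [|exists k; split; [lia|auto]].
    destruct (Nat.eq_dec ((h * A (k+4)) mod m) 0); [|exists (k+1)%nat; split; [lia|normA; auto]].
    destruct (Nat.eq_dec ((h * A (k+5)) mod m) 0); [|exists (k+2)%nat; split; [lia|normA; auto]].
    tauto. }
  pp (Hc _ Hnz). pp (Cmod_ge_0 (Cplus (RtoC 1) (ee m h (A (q+3))))).
  set (c := Cmod (Cplus (RtoC 1) (ee m h (A (q+3))))) in *.
  pp (x_three q ltac:(lia)). fold c in hh1.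
  pp (x_tri (q+3) ltac:(lia)). pp (x_tri (q+4) ltac:(lia)). pp (x_tri (q+5) ltac:(lia)).
  pp (a_rec q). pp (a_rec (q+1)). pp (a_rec (q+2)). pp (a_rec (q+3)). pp (a_rec (q+4)). pp (a_rec (q+5)).
  normA.
  pp (Hx q ltac:(lia)). pp (Hx (q+1)%nat ltac:(lia)). pp (Hx (q+2)%nat ltac:(lia)).
  pp (Hx (q+3)%nat ltac:(lia)). pp (Hx (q+4)%nat ltac:(lia)).
  pp (a_pos q). pp (a_pos (q+1)). pp (a_pos (q+2)). pp (a_pos (q+3)). pp (a_pos (q+4)).
  pp (x_ge0 (q+2)). pp (a_mono q (q+2) ltac:(lia)). pp (a_mono (q+1) (q+2) ltac:(lia)). pp (a_mono (q+3) (q+5) ltac:(lia)). pp (a_mono (q+4) (q+6) ltac:(lia)).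
  assert (E1 : c * x (q+2) <= (2 - d) * (B * a (q+2))) by (apply Rmult_le_compat; lra).
  assert (0 <= d * B) by nra.
  assert (F1 : d * B * a (q+5) <= d * B * (4 * a (q+2))) by (apply Rmult_le_compat_l; lra).
  assert (F2 : d * B * a (q+6) <= d * B * (2 * a (q+5))) by (apply Rmult_le_compat_l; lra).
  assert (F3 : d * B * a (q+7) <= d * B * (2 * a (q+6))) by (apply Rmult_le_compat_l; lra).
  assert (M3 : forall i, B * a (i+3) = B * a (i+2) + B * a i) by (intros; rewrite a_rec; ring).
  assert (N3 : forall i, d * B * a (i+3) = d * B * a (i+2) + d * B * a i) by (intros; rewrite a_rec; ring).
  pp (M3 q). pp (M3 (q+1)%nat). pp (M3 (q+2)%nat). pp (M3 (q+3)%nat). pp (M3 (q+4)%nat). pp (M3 (q+5)%nat).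
  pp (N3 q). pp (N3 (q+1)%nat). pp (N3 (q+2)%nat). pp (N3 (q+3)%nat). pp (N3 (q+4)%nat). pp (N3 (q+5)%nat).
  clear M3 N3. normA.
  assert (G5 : x (q+5) <= B * a (q+5) - d * B * a (q+5) / 4) by lra.
  assert (G6 : x (q+6) <= B * a (q+6) - d * B * a (q+6) / 8) by lra.
  assert (G7 : x (q+7) <= B * a (q+7) - d * B * a (q+7) / 16) by lra.
  assert (G8 : x (q+8) <= B * a (q+8) - d * B * a (q+8) / 16) by lra.
  assert (0 <= d * B * a (q+6)) by (apply Rmult_le_pos; lra).
  intros i Hi. apply (prop (q+6) (B * (1 - d/16))); try lia; normA; try lra.
Qed.

Lemma decay : forall d, 0 < d <= 1/2 ->
  (forall q, ((h * q) mod m <> 0)%nat -> Cmod (Cplus (RtoC 1) (ee m h q)) <= 2 - d) ->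
  forall t i, (2 + 8 * t <= i)%nat -> x i <= (1 - d/16) ^ t * a i.
Proof.
  intros d Hd Hc t. induction t as [|t IH]; intros i Hi.
  - simpl. unfold x, a, X. pp (SS_le m h (A i)). lra.
  - assert (Hp : 0 <= (1 - d/16) ^ t) by (apply pow_le; lra).
    pp (drop d Hd Hc (2 + 8*t)%nat ((1 - d/16)^t) ltac:(lia) Hp IH i ltac:(lia)).
    simpl. lra.
Qed.

Lemma X_small : forall eps, 0 < eps -> exists K, (4 <= K)%nat /\ forall i, (K <= i)%nat -> x i <= eps * a i.
Proof.
  intros eps He. destruct one_plus_ee as [d [Hd Hc]].
  destruct (pow_lt_1_zero (1 - d/16) ltac:(rewrite Rabs_right; lra) eps He) as [N HN].
  exists (2 + 8 * N + 4)%nat. split. lia. intros i Hi.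
  pp (decay d Hd Hc N i ltac:(lia)). pp (HN N ltac:(lia)).
  assert (0 <= (1 - d/16) ^ N) by (apply pow_le; lra).
  rewrite Rabs_right in hh0 by lra. pp (a_pos i). nra.
Qed.

Lemma SS_small : forall eps, 0 < eps -> exists C, forall N, Cmod (SS m h N) <= eps * INR N + C.
Proof.
  intros eps He. destruct (X_small eps He) as [K [HK HX]].
  exists (INR (A K)). intros N. induction N as [N IH] using lt_wf_ind.
  destruct (le_lt_dec (A K) N) as [HN|HN].
  - destruct (find_k K N HN) as [k [Hk1 [Hk2 Hk3]]].
    destruct k as [|[|[|[|k]]]]; try lia.
    replace (S (S (S (S k)))) with (k+4)%nat in * by lia.
    replace (S (k+4)) with (k+5)%nat in * by lia.
    pp (Ar (k+2)). normA. pp (A_mono (k+2) (k+3) ltac:(lia)).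
    replace N with (A (k+4) + (N - A (k+4)))%nat by lia.
    rewrite block by lia.
    eapply Rle_trans. apply Cmod_triangle. rewrite Cmod_mult, Cmod_ee.
    pp (HX (k+4)%nat ltac:(lia)). unfold x, X, a in hh1.
    pp (IH (N - A (k+4))%nat ltac:(pp (A_pos (k+4)); lia)).
    rewrite plus_INR. lra.
  - pp (SS_le m h N). apply lt_INR in HN. pp (pos_INR N). nra.
Qed.
End D.


Fixpoint rsum (f : nat -> R) (n : nat) : R :=
  match n with 0 => 0 | S n' => rsum f n' + f n' end.

Lemma rsum_ext : forall f g n, (forall i, (i < n)%nat -> f i = g i) -> rsum f n = rsum g n.
Proof. intros f g n. induction n; intros Hfg; simpl; auto. rewrite IHn, Hfg; auto. Qed.

Lemma rsum_plus : forall f g n, rsum (fun i => f i + g i) n = rsum f n + rsum g n.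
Proof. intros f g n. induction n; simpl. ring. rewrite IHn. ring. Qed.

Lemma rsum_const : forall c n, rsum (fun _ => c) n = INR n * c.
Proof. intros c n. induction n; simpl rsum. simpl; ring. rewrite IHn, S_INR. ring. Qed.

Lemma rsum_shift : forall f n, rsum f (S n) = f 0%nat + rsum (fun i => f (S i)) n.
Proof. intros f n. induction n. simpl. ring. simpl rsum in *. rewrite IHn. ring. Qed.

Lemma rsum_abs_le : forall f n b, (forall i, (i < n)%nat -> Rabs (f i) <= b) -> Rabs (rsum f n) <= INR n * b.
Proof.
  intros f n b. induction n; intros Hb; simpl rsum. rewrite Rabs_R0. simpl. lra.
  rewrite S_INR. eapply Rle_trans. apply Rabs_triang. pp (IHn ltac:(intros; apply Hb; lia)).
  pp (Hb n ltac:(lia)). lra.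
Qed.

Lemma ortho : forall m q, (1 <= m)%nat ->
  rsum (fun h => cos (ang m h q)) m = if Nat.eqb (q mod m) 0 then INR m else 0.
Proof.
  intros m q Hm.
  destruct (Nat.eqb_spec (q mod m) 0) as [E|E].
  - rewrite <- (Rmult_1_r (INR m)), <- rsum_const. apply rsum_ext. intros h Hh.
    pp (Nat.div_mod_eq q m). rewrite E, Nat.add_0_r in hh.
    unfold ang. rewrite hh, mult_INR.
    replace (2 * PI * INR h * (INR m * INR (q / m)) / INR m) with (0 + 2 * INR (h * (q/m)) * PI).
    rewrite cos_period. apply cos_0.
    rewrite mult_INR. field. apply not_0_INR. lia.
  - set (x := 2 * PI * INR q / INR m).
    assert (Hang : forall h, ang m h q = INR h * x) by (intros; unfold ang, x; unfold Rdiv; ring).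
    assert (Ht : forall n, 2 * sin (x/2) * rsum (fun h => cos (ang m h q)) n
                 = sin (INR n * x - x/2) + sin (x/2)).
    { induction n. simpl. replace (0 * x - x/2) with (- (x/2)) by ring. rewrite sin_neg. ring.
      simpl rsum. rewrite Rmult_plus_distr_l, IHn, Hang, S_INR.
      replace ((INR n + 1) * x - x/2) with (INR n * x + x/2) by field.
      rewrite sin_minus, sin_plus. ring. }
    pp (Ht m).
    assert (E2 : INR m * x - x/2 = - (x/2) + 2 * INR q * PI).
    { unfold x. field. apply not_0_INR. lia. }
    rewrite E2, sin_period, sin_neg in hh.
    assert (sin (x/2) <> 0).
    { intros Hs. pp (cos_ang_red m 1 q Hm). rewrite Nat.mul_1_l in hh0.
      pp (cos_lt_1 m (q mod m) ltac:(split; [lia|apply Nat.mod_upper_bound; lia])).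
      rewrite <- hh0 in hh1. unfold ang in hh1. rewrite Rmult_1_r in hh1.
      fold x in hh1. replace x with (2 * (x/2)) in hh1 by field.
      rewrite cos_2a_sin, Hs in hh1. lra. }
    apply Rmult_eq_reg_l with (2 * sin (x/2)). rewrite hh. ring. lra.
Qed.


Definition G m j h n := Re (Cmult (ee m h (m - j)) (SS m h n)).

Lemma G_S : forall m j h n, G m j h (S n) = G m j h n + cos (ang m h (H n + (m - j))).
Proof.
  intros. unfold G. simpl SS.
  replace (Cmult (ee m h (m - j)) (Cplus (SS m h n) (ee m h (H n))))
    with (Cplus (Cmult (ee m h (m - j)) (SS m h n)) (Cmult (ee m h (m - j)) (ee m h (H n)))) by ring.
  rewrite <- ee_add. replace (m - j + H n)%nat with (H n + (m - j))%nat by lia.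
  reflexivity.
Qed.

Lemma G_0 : forall m j n, G m j 0 n = INR n.
Proof.
  intros m j n. induction n. unfold G. simpl. ring.
  rewrite G_S, IHn, S_INR. unfold ang. simpl INR.
  replace (2 * PI * 0 * INR (H n + (m - j)) / INR m) with 0 by (unfold Rdiv; ring).
  rewrite cos_0. ring.
Qed.

Lemma G_bound : forall m j h n, Rabs (G m j h n) <= Cmod (SS m h n).
Proof.
  intros. unfold G. eapply Rle_trans. apply re_le_Cmod. rewrite Cmod_mult, Cmod_ee. lra.
Qed.

Lemma mod_shift : forall m j y, (j < m)%nat -> ((y + (m - j)) mod m = 0 <-> y mod m = j)%nat.
Proof.
  intros m j y Hj.
  rewrite <- Nat.Div0.add_mod_idemp_l.
  pp (Nat.mod_upper_bound y m ltac:(lia)).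
  set (r := (y mod m)%nat) in *.
  destruct (le_lt_dec j r).
  - replace (r + (m - j))%nat with ((r - j) + 1 * m)%nat by lia.
    rewrite Nat.Div0.mod_add, Nat.mod_small by lia. lia.
  - rewrite Nat.mod_small by lia. lia.
Qed.

Lemma count_id : forall m j N, (1 <= m)%nat -> (j < m)%nat ->
  INR m * INR (count_res m j N) = rsum (fun h => G m j h (S N) - G m j h 1) m.
Proof.
  intros m j N Hm Hj. induction N.
  - simpl count_res. simpl INR. rewrite Rmult_0_r. rewrite (rsum_ext _ (fun _ => 0)). rewrite rsum_const; ring. intros; ring.
  - simpl count_res. rewrite plus_INR, Rmult_plus_distr_l, IHN.
    rewrite (rsum_ext (fun h => G m j h (S (S N)) - G m j h 1)
       (fun h => (G m j h (S N) - G m j h 1) + cos (ang m h (H (S N) + (m - j))))).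
    2: { intros h0 _. rewrite (G_S m j h0 (S N)). ring. }
    rewrite rsum_plus, ortho by auto. f_equal.
    destruct (Nat.eqb_spec (H (S N) mod m) j) as [E|E];
    destruct (Nat.eqb_spec ((H (S N) + (m - j)) mod m) 0) as [E'|E'];
    rewrite <- (mod_shift m j (H (S N)) Hj) in E; try tauto; simpl; ring.
Qed.

Lemma SS_small_unif : forall m, (2 <= m)%nat -> forall eps, 0 < eps -> exists C, 0 <= C /\
  forall h N, (0 < h < m)%nat -> Cmod (SS m h N) <= eps * INR N + C.
Proof.
  intros m Hm eps He.
  assert (forall M, exists C, 0 <= C /\ forall h N, (0 < h <= M)%nat -> (h < m)%nat -> Cmod (SS m h N) <= eps * INR N + C).
  { induction M as [|M [C [HC IH]]].
    - exists 0. split. lra. intros; lia.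
    - destruct (lt_dec (S M) m) as [HM|HM].
      + destruct (SS_small m (S M) Hm ltac:(lia) eps He) as [C' HC'].
        exists (Rmax C (Rabs C')). split. pp (Rmax_l C (Rabs C')). lra.
        intros h N Hh1 Hh2. pp (Rmax_l C (Rabs C')). pp (Rmax_r C (Rabs C')). pp (Rle_abs C').
        destruct (Nat.eq_dec h (S M)). subst. pp (HC' N). lra.
        pp (IH h N ltac:(lia) Hh2). lra.
      + exists C. split; auto. intros. apply IH; lia. }
  destruct (H (m)) as [C [HC HC2]]. exists C. split; auto. intros. apply HC2; lia.
Qed.


Lemma SS_small_all : forall m, (1 <= m)%nat -> forall eps, 0 < eps -> exists C, 0 <= C /\
  forall h N, (0 < h < m)%nat -> Cmod (SS m h N) <= eps * INR N + C.
Proof.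
  intros m Hm eps He. destruct (le_lt_dec 2 m). apply SS_small_unif; auto.
  exists 0. split. lra. intros; lia.
Qed.

Theorem mainTheorem8 :
  forall m j : nat, (1 <= m)%nat -> (j < m)%nat ->
    Un_cv (fun N : nat => INR (count_res m j N) / INR N) (1 / INR m).
Proof.
  intros m j Hm Hj eps Heps.
  destruct (SS_small_all m Hm (eps/4) ltac:(lra)) as [C [HC HS]].
  destruct (INR_archimed (eps/4) (C+1) ltac:(lra)) as [n Hn].
  exists (Nat.max n 1). intros N HN. unfold R_dist.
  assert (HN1 : 1 <= INR N) by (apply (le_INR 1); lia).
  assert (HNn : INR n <= INR N) by (apply le_INR; lia).
  assert (Hm1 : 1 <= INR m) by (apply (le_INR 1); lia).
  set (K := eps/4 * (INR N + 1) + C + 1).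
  set (D := INR m * INR (count_res m j N) - INR N).
  assert (HD : Rabs D <= INR m * K).
  { unfold D. rewrite count_id by auto.
    destruct m as [|m']; [lia|]. rewrite rsum_shift.
    rewrite !G_0. rewrite S_INR. simpl INR at 2.
    replace (INR N + 1 - 1 + rsum (fun i => G (S m') j (S i) (S N) - G (S m') j (S i) 1) m' - INR N)
      with (rsum (fun i => G (S m') j (S i) (S N) - G (S m') j (S i) 1) m') by ring.
    eapply Rle_trans. apply rsum_abs_le with (b := K).
    - intros i Hi. eapply Rle_trans. apply Rabs_triang. rewrite Rabs_Ropp.
      pp (G_bound (S m') j (S i) (S N)). pp (G_bound (S m') j (S i) 1).
      pp (HS (S i) (S N) ltac:(lia)). pp (SS_le (S m') (S i) 1). rewrite S_INR in hh1.
      simpl INR in hh2. unfold K. lra.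
    - rewrite S_INR. assert (0 <= K) by (unfold K; pp (pos_INR N); nra). nra. }
  assert (HK : K < eps * INR N) by (unfold K; nra).
  replace (INR (count_res m j N) / INR N - 1 / INR m) with (D / (INR m * INR N))
    by (unfold D; field; lra).
  unfold Rdiv. rewrite Rabs_mult, Rabs_inv, (Rabs_right (INR m * INR N)) by nra.
  apply (Rmult_lt_reg_r (INR m * INR N)). nra.
  replace (Rabs D * / (INR m * INR N) * (INR m * INR N)) with (Rabs D) by (field; lra).
  nra.
Qed.
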